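(* Let $f^{cl}_{\pi_\star}$ be $\eta$-locally $\delta$-ISS for some $\eta>0$, with gain $\gamma$ satisfying $\gamma(x)\le O(x^{1/r})$ as $x\to0^+$ for some $r\ge1$. Fix a test policy $\pi$ and $\xi\in\mathcal X$, and let $p=r\in\mathbb N$. Assume $\pi,\pi_\star$ are $p$-times continuously differentiable with $\|\bar\pi(x)-\sum_{j=0}^p\frac1{j!}\partial_x^j\bar\pi(x_0)(x-x_0)^{\otimes j}\|\le\frac{L_{\partial^p\pi}}{(p+1)!}\|x-x_0\|^{p+1}$ for all $x,x_0$ and $\bar\pi\in\{\pi,\pi_\star\}$. Choose $\mu,\alpha>0$, $\alpha\le1/2$, with \[2\tfrac{L_{\partial^p\pi}}{(p+1)!}x^{p+1}+(x/\mu)^p\le\gamma^{-1}(x)\quad\text{for all }0\le x\le\alpha.\] If \[\max_{0\le t\le T-1}\max_{0\le j\le p-1}\mu\Big(\tfrac{4}{j!}\|\partial_x^j\Delta_t^{\pi_\star}(\xi;\pi)\|\Big)^{1/p}\le\alpha,\] \[\max_{0\le t\le T-1}\max_{0\le j\le p-1}\Big[\tfrac{2L_{\partial^p\pi}\mu^{p+1}}{(p+1)!}\Big(\tfrac{4}{j!}\|\partial_x^j\Delta_t^{\pi_\star}(\xi;\pi)\|\Big)^{\frac{p+1}{p}}+\tfrac4{j!}\|\partial_x^j\Delta_t^{\pi_\star}(\xi;\pi)\|\Big]\le\eta,\] and $\|\partial_x^p\Delta_t^{\pi_\star}(\xi;\pi)\|\le\frac{p!}{2\mu^p}$ for all $0\le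 t\le T-1$, then for all $1\le t\le T$, \[\|x_t^{\pi_\star}(\xi)-x_t^\pi(\xi)\|\le\max_{0\le k\le t-1}\max_{0\le j\le p-1}\mu\Big(\tfrac4{j!}\Big)^{1/r}\|\partial_x^j\Delta_k^{\pi_\star}(\xi;\pi)\|^{1/r}.\]
   Context: Dynamics $x_{t+1}=f(x_t,u_t)$, $x_0=\xi$. For a policy $\pi$, $f^{cl}_\pi(x,\Delta):=f(x,\pi(x)+\Delta)$; $x_t^\pi(\xi,\{\Delta_s\})$ is the state at time $t$, $x_t^\pi(\xi):=x_t^\pi(\xi,\{0\})$. Initial conditions lie in compact $\mathcal X$. Norms: Euclidean/operator norm. $f^{cl}_\pi$ is $\eta$-locally $\delta$-ISS if there are class $\mathcal{KL}$ $\beta$ and class $\mathcal K$ $\gamma$ with $\|x_t^\pi(\xi_1;\{\Delta_s\}_{s=0}^{t-1})-x_t^\pi(\xi_2;\{0\})\|\le\beta(\|\xi_1-\xi_2\|,t)+\gamma(\max_{0\le k\le t-1}\|\Delta_k\|)$ for all $\xi_1,\xi_2\in\mathcal X$, $t$, and perturbations with $\sup_t\|\Delta_t\|\le\eta$. $\gamma^{-1}$ is the inverse on the range of $\gamma$ ($+\infty$ beyond it). $\partial_x^j\Delta_t^{\pi_\star}(\xi;\pi):=\partial_x^j\pi(x_t^{\pi_\star}(\xi))-\partial_x^j\pi_\star(x_t^{\pi_\star}(\xi))$ for expert policy $\pi_\star$. *)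

(* Defs.v *)
From HB Require Import structures.
From mathcomp Require Import all_boot all_order all_algebra.
From mathcomp Require Import all_classical all_reals all_analysis.
Set Implicit Arguments. Unset Strict Implicit. Unset Printing Implicit Defensive.
Import Order.TTheory GRing.Theory Num.Theory.
Import numFieldNormedType.Exports.
Local Open Scope classical_set_scope.
Local Open Scope ring_scope.

Section Defs.
Variable R : realType.

(* Euclidean norm on row vectors (the library's default norm on 'rV is the sup norm). *)
Definition enorm (k : nat) (v : 'rV[R]_k) : R :=
  Num.sqrt (\sum_(i < k) (v ord0 i) ^+ 2).

(* Iterated directional derivatives: iderive [:: v1; ...; vj] g x
   = D^j g(x)[v1, ..., vj] (the j-th derivative applied to v1..vj). *)
Fixpoint iderive (n m : nat) (vs : seq 'rV[R]_n) (g : 'rV[R]_n -> 'rV[R]_m)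
  : 'rV[R]_n -> 'rV[R]_m :=
  match vs with
  | [::] => g
  | v :: vs' => fun x => 'D_v (iderive vs' g) x
  end.

Definition Cp (n m p : nat) (g : 'rV[R]_n -> 'rV[R]_m) : Prop :=
  forall vs : seq 'rV[R]_n, (size vs <= p)%N ->
    continuous (iderive vs g) /\
    ((size vs < p)%N -> forall x, differentiable (iderive vs g) x).

(* Operator norm (Euclidean norms) of a j-multilinear map A given by its
   action on j-tuples (sequences of size j) of vectors. *)
Definition opnorm (n m j : nat) (A : seq 'rV[R]_n -> 'rV[R]_m) : R :=
  sup [set r | exists vs : seq 'rV[R]_n,
        [/\ size vs = j, (forall v, v \in vs -> enorm v <= 1) & r = enorm (A vs)]].

Definition dDelta_norm (n m j : nat) (pi pistar : 'rV[R]_n -> 'rV[R]_m)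
    (x : 'rV[R]_n) : R :=
  opnorm j (fun vs => iderive vs pi x - iderive vs pistar x).

Fixpoint traj (n m : nat) (f : 'rV[R]_n -> 'rV[R]_m -> 'rV[R]_n)
    (pi : 'rV[R]_n -> 'rV[R]_m) (Delta : nat -> 'rV[R]_m) (xi : 'rV[R]_n)
    (t : nat) : 'rV[R]_n :=
  match t with
  | 0 => xi
  | t'.+1 => let x := traj f pi Delta xi t' in f x (pi x + Delta t')
  end.

Definition classK (g : R -> R) : Prop :=
  g 0 = 0 /\ {within `[0, +oo[%classic, continuous g} /\
  (forall a b, 0 <= a -> a < b -> g a < g b).

Definition classKL (b : R -> nat -> R) : Prop :=
  (forall t, classK (fun s => b s t)) /\
  (forall s, 0 <= s -> forall t1 t2, (t1 <= t2)%N -> b s t2 <= b s t1) /\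
  (forall s, 0 <= s -> b s t @[t --> \oo] --> 0).

(* f^cl_pi(x, D) := f(x, pi x + D) is eta-locally delta-ISS on X
   with KL function beta and class K gain gamma. *)
Definition locally_dISS (n m : nat) (f : 'rV[R]_n -> 'rV[R]_m -> 'rV[R]_n)
    (pi : 'rV[R]_n -> 'rV[R]_m) (X : set 'rV[R]_n) (eta : R)
    (beta : R -> nat -> R) (gamma : R -> R) : Prop :=
  classKL beta /\ classK gamma /\
  forall xi1 xi2, X xi1 -> X xi2 -> forall (Delta : nat -> 'rV[R]_m),
    (forall s, enorm (Delta s) <= eta) -> forall t,
    enorm (traj f pi Delta xi1 t - traj f pi (fun _ => 0) xi2 t)
      <= beta (enorm (xi1 - xi2)) t
         + gamma (\big[Num.max/0]_(k < t) enorm (Delta k)).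

(* y <= gamma^{-1}(x), where gamma^{-1} is the inverse of gamma on its range
   (over [0,+oo)) and +oo outside the range. *)
Definition le_ginv (gamma : R -> R) (y x : R) : Prop :=
  forall s, 0 <= s -> gamma s = x -> y <= s.

End Defs.

(* Main.v *)
Require Import Defs.
From HB Require Import structures.
From mathcomp Require Import all_boot all_order all_algebra.
From mathcomp Require Import all_classical all_reals all_analysis.
From mathcomp Require Import ring lra.
Import Order.TTheory GRing.Theory Num.Theory.
Import numFieldNormedType.Exports.
Local Open Scope classical_set_scope.
Local Open Scope ring_scope.
Set Implicit Arguments. Unset Strict Implicit.

Section Enorm.
Variable R : realType.
Implicit Types (k : nat).

Lemma enorm_ge0 {k} (v : 'rV[R]_k) : 0 <= enorm v.
Proof. exact: sqrtr_ge0. Qed.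

Lemma sumsq_ge0 {k} (v : 'rV[R]_k) : 0 <= \sum_(i < k) v ord0 i ^+ 2.
Proof. by apply: sumr_ge0 => i _; exact: sqr_ge0. Qed.

Lemma enormZ {k} c (v : 'rV[R]_k) : enorm (c *: v) = `|c| * enorm v.
Proof.
rewrite /enorm; under eq_bigr do rewrite mxE exprMn.
by rewrite -mulr_sumr sqrtrM ?sqr_ge0 // sqrtr_sqr.
Qed.

Lemma enormN {k} (v : 'rV[R]_k) : enorm (- v) = enorm v.
Proof. by rewrite -scaleN1r enormZ normrN1 mul1r. Qed.

Lemma enormB {k} (u v : 'rV[R]_k) : enorm (u - v) = enorm (v - u).
Proof. by rewrite -enormN opprB. Qed.

Lemma enorm0 {k} : enorm (0 : 'rV[R]_k) = 0.
Proof. by rewrite -(scale0r (0 : 'rV[R]_k)) enormZ normr0 mul0r. Qed.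

Lemma coord_le {k} (v : 'rV[R]_k) i : `|v ord0 i| <= enorm v.
Proof.
rewrite -sqrtr_sqr /enorm; apply: ler_wsqrtr.
rewrite (bigD1 i) //= lerDl; apply: sumr_ge0 => j _; exact: sqr_ge0.
Qed.

Lemma CS_aux {k} (a b : 'rV[R]_k) s : 0 < s ->
  2 * \sum_i a ord0 i * b ord0 i <=
  s * \sum_i a ord0 i ^+ 2 + s^-1 * \sum_i b ord0 i ^+ 2.
Proof.
move=> s0; rewrite !mulr_sumr -big_split /=; apply: ler_sum => i _.
set x := a ord0 i; set y := b ord0 i.
rewrite -subr_ge0.
have -> : s * x ^+ 2 + s^-1 * y ^+ 2 - 2 * (x * y) = s^-1 * (s * x - y) ^+ 2.
  by field; rewrite gt_eqF.
by apply: mulr_ge0; [rewrite invr_ge0 ltW|exact: sqr_ge0].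
Qed.

Lemma CS {k} (a b : 'rV[R]_k) :
  \sum_i a ord0 i * b ord0 i <= enorm a * enorm b.
Proof.
set A := \sum_i a ord0 i ^+ 2; set B := \sum_i b ord0 i ^+ 2.
have A0 : 0 <= A by exact: sumsq_ge0.
have B0 : 0 <= B by exact: sumsq_ge0.
have [Ae|Apos] := eqVneq A 0.
  have az : forall i, a ord0 i = 0.
    move=> i; apply/eqP; rewrite -sqrf_eq0; apply/eqP.
    by move/eqP: Ae; rewrite psumr_eq0 => [/allP/(_ i (mem_index_enum _))/implyP/(_ isT)/eqP|j _]; [|exact: sqr_ge0].
  rewrite big1 ?mulr_ge0 ?enorm_ge0 // => i _; by rewrite az mul0r.
have [Be|Bpos] := eqVneq B 0.
  have bz : forall i, b ord0 i = 0.
    move=> i; apply/eqP; rewrite -sqrf_eq0; apply/eqP.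
    by move/eqP: Be; rewrite psumr_eq0 => [/allP/(_ i (mem_index_enum _))/implyP/(_ isT)/eqP|j _]; [|exact: sqr_ge0].
  rewrite big1 ?mulr_ge0 ?enorm_ge0 // => i _; by rewrite bz mulr0.
have sA : 0 < Num.sqrt A by rewrite sqrtr_gt0 lt_def Apos A0.
have sB : 0 < Num.sqrt B by rewrite sqrtr_gt0 lt_def Bpos B0.
have := CS_aux a b (divr_gt0 sB sA); rewrite -/A -/B.
rewrite invf_div.
have eA : A = Num.sqrt A ^+ 2 by rewrite sqr_sqrtr.
have eB : B = Num.sqrt B ^+ 2 by rewrite sqr_sqrtr.
rewrite [X in _ * X + _]eA [X in _ + _ * X]eB => H.
rewrite /enorm -/A -/B.
have : 2 * \sum_i a ord0 i * b ord0 i <= 2 * (Num.sqrt A * Num.sqrt B).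
  apply: (le_trans H); rewrite le_eqVlt; apply/orP; left; apply/eqP.
  by field; apply/andP; split; rewrite gt_eqF.
by rewrite ler_pM2l.
Qed.

Lemma enormD {k} (u v : 'rV[R]_k) : enorm (u + v) <= enorm u + enorm v.
Proof.
have h : \sum_i (u + v) ord0 i ^+ 2 =
   \sum_i u ord0 i ^+ 2 + 2 * \sum_i u ord0 i * v ord0 i + \sum_i v ord0 i ^+ 2.
  rewrite mulr_sumr -!big_split /=; apply: eq_bigr => i _.
  rewrite mxE sqrrD; ring.
rewrite {1}/enorm h -(ger0_norm (addr_ge0 (enorm_ge0 u) (enorm_ge0 v))).
rewrite -sqrtr_sqr; apply: ler_wsqrtr.
rewrite sqrrD /enorm !sqr_sqrtr ?sumsq_ge0 // lerD2r lerD2l.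
rewrite mulr2n -mulr2n -mulr_natl; apply: ler_wpM2l => //; exact: CS.
Qed.

Lemma enorm_sum {k} (I : Type) (r : seq I) (P : pred I) (F : I -> 'rV[R]_k) :
  enorm (\sum_(i <- r | P i) F i) <= \sum_(i <- r | P i) enorm (F i).
Proof.
elim/big_ind2 : _ => [|x1 x2 y1 y2 h1 h2|]; first by rewrite enorm0.
  by apply: (le_trans (enormD _ _)); exact: lerD.
by [].
Qed.

End Enorm.
Section Deriv.
Variables (R : realType) (n m p : nat) (g : 'rV[R]_n -> 'rV[R]_m).
Hypothesis Cg : Cp p g.

Lemma iderive_cat (ws vs : seq 'rV[R]_n) (h : 'rV[R]_n -> 'rV[R]_m) :
  iderive (ws ++ vs) h = iderive ws (iderive vs h).
Proof. by elim: ws => //= w ws IH; rewrite IH. Qed.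

Lemma idiff (vs : seq 'rV[R]_n) x : (size vs < p)%N -> differentiable (iderive vs g) x.
Proof. by move=> h; have [_ ] := Cg (ltnW h); apply. Qed.

Lemma mlin (ws rest : seq 'rV[R]_n) (v : 'rV[R]_n) :
  (size ws + (size rest).+1 <= p)%N ->
  iderive (ws ++ v :: rest) g =
  fun x => \sum_(k < n) v ord0 k *: iderive (ws ++ delta_mx 0 k :: rest) g x.
Proof.
elim: ws => [|w ws IH] hs /=.
  apply: funext => x /=.
  have dH := @idiff rest x hs.
  rewrite deriveE //.
  have -> : 'd (iderive rest g) x v =
     'd (iderive rest g) x (\sum_(k < n) v ord0 k *: delta_mx 0 k)
    by rewrite -row_sum_delta.
  rewrite linear_sum; apply: eq_bigr => k _.
  by rewrite linearZ /= deriveE.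
apply: funext => x /=.
rewrite IH; last by rewrite ltnW.
have der : forall k : 'I_n, derivable
    (fun y => v ord0 k *: iderive (ws ++ delta_mx 0 k :: rest) g y) x w.
  move=> k; apply: (@derivableZ _ _ _ (iderive (ws ++ delta_mx 0 k :: rest) g)).
  apply: diff_derivable; apply: idiff.
  by rewrite size_cat /=.
rewrite -(fct_sumE _ _ (fun k y => v ord0 k *: iderive (ws ++ delta_mx 0 k :: rest) g y)).
rewrite derive_sum //; apply: eq_bigr => k _.
rewrite (@deriveZ _ _ _ (iderive (ws ++ delta_mx 0 k :: rest) g)) //.
apply: diff_derivable; apply: idiff.
by rewrite size_cat /=.
Qed.

Lemma iscale (j : nat) (a : R) (v : 'rV[R]_n) :
  (j <= p)%N ->
  iderive (nseq j (a *: v)) g = fun x => a ^+ j *: iderive (nseq j v) g x.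
Proof.
elim: j => [|j IH] hj /=; first by apply: funext => x; rewrite expr0 scale1r.
apply: funext => x.
rewrite IH; last exact: ltnW.
have dH : differentiable (iderive (nseq j v) g) x by apply: idiff; rewrite size_nseq.
rewrite (@deriveZ _ _ _ (iderive (nseq j v) g)); last exact: diff_derivable.
by rewrite deriveE // linearZ /= -deriveE // scalerA exprSr.
Qed.

End Deriv.

Section Bound.
Variables (R : realType) (n m p : nat).

Lemma ibound (g : 'rV[R]_n -> 'rV[R]_m) (x : 'rV[R]_n) : Cp p g ->
  forall j (ws : seq 'rV[R]_n), (size ws + j <= p)%N ->
  exists M, 0 <= M /\ forall vs, size vs = j -> (forall v, v \in vs -> enorm v <= 1) ->
    enorm (iderive (ws ++ vs) g x) <= M.
Proof.
move=> Cg; elim=> [|j IH] ws hs.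
  exists (enorm (iderive (ws ++ [::]) g x)); split; first exact: enorm_ge0.
  by move=> vs /size0nil -> _.
have hex : forall k : 'I_n, exists M, 0 <= M /\ forall vs, size vs = j ->
   (forall v, v \in vs -> enorm v <= 1) ->
   enorm (iderive (rcons ws (delta_mx 0 k) ++ vs) g x) <= M.
  move=> k; apply: IH; by rewrite size_rcons addSnnS.
have [Mf hM] := choice hex.
exists (\sum_(k < n) Mf k); split; first by apply: sumr_ge0 => k _; case: (hM k).
case=> [//|v1 vs] /= [hsz] hv.
rewrite (mlin Cg); last by rewrite hsz.
apply: (le_trans (enorm_sum _ _ _)); apply: ler_sum => k _.
rewrite enormZ -(mul1r (Mf k)); apply: ler_pM; [exact: normr_ge0|exact: enorm_ge0| |].
  apply: (le_trans (coord_le _ _)); apply: hv; exact: mem_head.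
rewrite -cat_rcons; case: (hM k) => _; apply => // v hv'.
by apply: hv; rewrite inE hv' orbT.
Qed.

Variables (g1 g2 : 'rV[R]_n -> 'rV[R]_m) (x : 'rV[R]_n).
Hypotheses (C1 : Cp p g1) (C2 : Cp p g2).
Let A := fun vs : seq 'rV[R]_n => iderive vs g1 x - iderive vs g2 x.
Let S j := [set r | exists vs : seq 'rV[R]_n,
        [/\ size vs = j, (forall v, v \in vs -> enorm v <= 1) & r = enorm (A vs)]].

Lemma S_has_sup j : (j <= p)%N -> has_sup (S j).
Proof.
move=> hj; split.
  exists (enorm (A (nseq j 0))); exists (nseq j 0); split => //; first by rewrite size_nseq.
  by move=> v /nseqP [-> _]; rewrite enorm0.
have [M1 [_ h1]] := ibound x C1 (ws := [::]) hj.
have [M2 [_ h2]] := ibound x C2 (ws := [::]) hj.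
exists (M1 + M2) => r [vs [hs hv ->]].
apply: (le_trans (enormD _ _)); rewrite enormN; apply: lerD; [exact: h1|exact: h2].
Qed.

Lemma opnorm_ge0 j : (j <= p)%N -> 0 <= opnorm j A.
Proof.
move=> hj; apply: le_trans (enorm_ge0 (A (nseq j 0))) _.
apply: sup_upper_bound; first exact: S_has_sup.
exists (nseq j 0); split => //; first by rewrite size_nseq.
by move=> v /nseqP [-> _]; rewrite enorm0.
Qed.

Lemma opnorm_bound j (v : 'rV[R]_n) : (j <= p)%N ->
  enorm (A (nseq j v)) <= opnorm j A * enorm v ^+ j.
Proof.
move=> hj.
set e := enorm v.
pose u := if e == 0 then 0 else e^-1 *: v.
have hvu : v = e *: u.
  rewrite /u; case: eqP => [e0|/eqP e0]; last by rewrite scalerA mulfV // scale1r.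
  rewrite scaler0; apply/rowP => i; rewrite mxE; apply/eqP; rewrite -normr_le0.
  by rewrite -e0 coord_le.
have hu : enorm u <= 1.
  rewrite /u; case: eqP => [_|/eqP e0]; first by rewrite enorm0.
  by rewrite enormZ ger0_norm ?invr_ge0 ?enorm_ge0 // mulVf.
have -> : A (nseq j v) = e ^+ j *: A (nseq j u).
  by rewrite /A hvu (iscale C1) // (iscale C2) // scalerBr.
rewrite enormZ ger0_norm ?exprn_ge0 ?enorm_ge0 // mulrC ler_wpM2r ?exprn_ge0 ?enorm_ge0 //.
apply: sup_upper_bound; first exact: S_has_sup.
exists (nseq j u); split => //; first by rewrite size_nseq.
by move=> w /nseqP [-> _].
Qed.

End Bound.
Section Misc.
Variable R : realType.

Lemma ginv_bound (gamma : R -> R) (y e Phi : R) : classK gamma ->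
  0 <= y -> 0 <= e -> y <= Phi -> le_ginv gamma Phi e -> gamma y <= e.
Proof.
move=> [g0 [gc ginc]] y0 e0 yP hg.
rewrite leNgt; apply/negP => hlt.
have cont : {within `[0, y], continuous gamma}.
  apply: continuous_subspaceW gc => z /=; rewrite !in_itv /= => /andP[-> _].
  by [].
have hv : Num.min (gamma 0) (gamma y) <= e <= Num.max (gamma 0) (gamma y).
  rewrite g0 /Num.min /Num.max.
  have h0 : 0 < gamma y by apply: le_lt_trans hlt.
  by rewrite h0 e0 ltW.
have [c] := @IVT R gamma 0 y e y0 cont hv.
rewrite in_itv /= => /andP[c0 cy] gce.
have := hg c c0 gce => Pc.
have cye : c = y by apply/eqP; rewrite eq_le cy (le_trans yP Pc).
by move: hlt; rewrite -gce cye ltxx.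
Qed.

Lemma bmax_ge0 (I : Type) (r : seq I) (P : pred I) (F : I -> R) :
  0 <= \big[Num.max/0]_(i <- r | P i) F i.
Proof.
elim: r => [|a r IH]; rewrite ?big_nil // big_cons.
by case: ifP => // _; rewrite le_max IH orbT.
Qed.

Lemma bmax_cases t (F : 'I_t -> R) :
  \big[Num.max/0]_(i < t) F i = 0 \/ exists i, \big[Num.max/0]_(i < t) F i = F i.
Proof.
elim/big_ind: _; [by left| |by move=> i _; right; exists i].
move=> a b ha hb; rewrite /Num.max; case: ifP => _; [exact: hb|exact: ha].
Qed.

Lemma bmax_ub t (G : nat -> R) i : (i < t)%N -> G i <= \big[Num.max/0]_(k < t) G k.
Proof. by move=> h; rewrite (bigD1 (Ordinal h)) //= le_max lexx. Qed.

Lemma bmax_le t (G : nat -> R) c : 0 <= c -> (forall i, (i < t)%N -> G i <= c) ->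
  \big[Num.max/0]_(k < t) G k <= c.
Proof. by move=> c0 h; apply: bigmax_le => // i _; exact: h. Qed.

Lemma geom N : \sum_(j < N) (2^-1 : R) ^+ j <= 2.
Proof.
suff : \sum_(j < N) (2^-1 : R) ^+ j <= 2 - 2 * 2^-1 ^+ N.
  move=> h; apply: le_trans h _; rewrite lerBlDr lerDl mulr_ge0 // exprn_ge0 //.
elim: N => [|N IH]; first by rewrite big_ord0 expr0 mulr1 subrr.
rewrite big_ord_recr /= exprSr.
have -> : 2 - 2 * (2^-1 ^+ N * 2^-1) = (2 - 2 * (2^-1 : R) ^+ N) + 2^-1 ^+ N by field.
by rewrite lerD2r.
Qed.

Lemma powR_invK (c : R) p : 0 <= c -> (0 < p)%N -> (c `^ (p%:R)^-1) ^+ p = c.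
Proof.
move=> c0 p0; rewrite -powR_mulrn ?powR_ge0 // -powRrM mulVf ?powRr1 //.
by rewrite pnatr_eq0 -lt0n.
Qed.

Lemma powR_invS (c : R) p : 0 <= c -> (0 < p)%N ->
  (c `^ (p%:R)^-1) ^+ p.+1 = c `^ (p.+1%:R / p%:R).
Proof.
move=> c0 p0; rewrite -powR_mulrn ?powR_ge0 // -powRrM mulrC.
by [].
Qed.

End Misc.
Section DB.
Variable R : realType.

Lemma zmod_id (V : zmodType) (a b c e : V) : a - c = (a - b) - (c - e) + (b - e).
Proof.
have h : (e - c) + (b - e) = b - c by rewrite addrC addrA subrK.
by rewrite opprB -addrA h addrA subrK.
Qed.

Lemma delta_bound n m p (pi pistar : 'rV[R]_n -> 'rV[R]_m) (L mu eps : R) (x x0 : 'rV[R]_n) :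
  (0 < p)%N -> Cp p pi -> Cp p pistar -> 0 <= L -> 0 < mu -> 0 <= eps -> eps <= 2^-1 ->
  enorm (pi x - \sum_(j < p.+1) (j`!%:R)^-1 *: iderive (nseq j (x - x0)) pi x0)
     <= L / (p.+1)`!%:R * enorm (x - x0) ^+ p.+1 ->
  enorm (pistar x - \sum_(j < p.+1) (j`!%:R)^-1 *: iderive (nseq j (x - x0)) pistar x0)
     <= L / (p.+1)`!%:R * enorm (x - x0) ^+ p.+1 ->
  enorm (x - x0) <= eps ->
  (forall j, (j < p)%N -> mu * (4 / j`!%:R * dDelta_norm j pi pistar x0) `^ (p%:R)^-1 <= eps) ->
  dDelta_norm p pi pistar x0 <= p`!%:R / (2 * mu ^+ p) ->
  enorm (pi x - pistar x) <= 2 * (L / (p.+1)`!%:R) * eps ^+ p.+1 + (eps / mu) ^+ p.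
Proof.
move=> p0 C1 C2 L0 mu0 e0 e2 T1 T2 hv hj hp.
set v := x - x0 in T1 T2 hv.
set e := enorm v in T1 T2 hv.
pose d j := dDelta_norm j pi pistar x0.
pose Tg (g : 'rV[R]_n -> 'rV[R]_m) := \sum_(j < p.+1) (j`!%:R)^-1 *: iderive (nseq j v) g x0.
have ES : Tg pi - Tg pistar = \sum_(j < p.+1)
    (j`!%:R)^-1 *: (iderive (nseq j v) pi x0 - iderive (nseq j v) pistar x0).
  by rewrite /Tg -sumrB; apply: eq_bigr => j _; rewrite scalerBr.
have ee0 : 0 <= e by exact: enorm_ge0.
have Lc : 0 <= L / (p.+1)`!%:R by rewrite divr_ge0 // ler0n.
have Rb : L / (p.+1)`!%:R * e ^+ p.+1 <= L / (p.+1)`!%:R * eps ^+ p.+1.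
  by apply: ler_wpM2l => //; apply: lerXn2r; rewrite ?nnegrE.
have hA : forall j : 'I_p.+1, enorm ((j`!%:R)^-1 *:
     (iderive (nseq j v) pi x0 - iderive (nseq j v) pistar x0)) <= (j`!%:R)^-1 * (d j * e ^+ j).
  move=> j; rewrite enormZ ger0_norm ?invr_ge0 ?ler0n //; apply: ler_wpM2l.
    by rewrite invr_ge0 ler0n.
  exact: (opnorm_bound x0 C1 C2 v (ltn_ord j)).
have emu0 : 0 <= (eps / mu) ^+ p by rewrite exprn_ge0 // divr_ge0 // ltW.
have hB : forall i : 'I_p, (i`!%:R)^-1 * (d i * e ^+ i) <= (eps / mu) ^+ p / 4 * 2^-1 ^+ i.
  move=> i; set c := 4 / i`!%:R * d i.
  have dge : 0 <= d i by exact: (opnorm_ge0 x0 C1 C2 (ltnW (ltn_ord i))).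
  have c0 : 0 <= c by rewrite /c mulr_ge0 // divr_ge0 // ler0n.
  have -> : (i`!%:R)^-1 * (d i * e ^+ i) = c / 4 * e ^+ i.
    by rewrite /c; field; rewrite pnatr_eq0 -lt0n fact_gt0.
  apply: ler_pM.
  - by rewrite divr_ge0.
  - by rewrite exprn_ge0.
  - rewrite ler_pM2r // -[c](powR_invK c0 p0); apply: lerXn2r.
    + by rewrite nnegrE powR_ge0.
    + by rewrite nnegrE divr_ge0 // ltW.
    + by rewrite ler_pdivlMr // mulrC; exact: hj.
  - by apply: lerXn2r; rewrite ?nnegrE ?(le_trans hv).
have hsum : enorm (Tg pi - Tg pistar) <= (eps / mu) ^+ p.
  rewrite ES; apply: le_trans (enorm_sum _ _ _) _.
  rewrite big_ord_recr /=.
  apply: le_trans (lerD (ler_sum _ (fun j _ => hA (widen_ord (leqnSn p) j))) (hA ord_max)) _.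
  apply: le_trans (lerD (ler_sum _ (fun j _ => hB j)) (lexx _)) _.
  rewrite -mulr_sumr.
  have h1 : (eps / mu) ^+ p / 4 * \sum_(i < p) 2^-1 ^+ i <= (eps / mu) ^+ p / 2.
    apply: le_trans (ler_wpM2l _ (geom R p)) _; first by rewrite divr_ge0.
    by rewrite le_eqVlt; apply/orP; left; apply/eqP; field.
  have h2 : (p`!%:R)^-1 * (d p * e ^+ p) <= (eps / mu) ^+ p / 2.
    have dge : 0 <= d p by exact: (opnorm_ge0 x0 C1 C2 (leqnn p)).
    apply: le_trans (_ : (p`!%:R)^-1 * (p`!%:R / (2 * mu ^+ p) * eps ^+ p) <= _).
      apply: ler_wpM2l; first by rewrite invr_ge0 ler0n.
      apply: ler_pM => //; first by rewrite exprn_ge0.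
      by apply: lerXn2r; rewrite ?nnegrE.
    rewrite le_eqVlt; apply/orP; left; apply/eqP; rewrite expr_div_n; field.
    by rewrite pnatr_eq0 -lt0n fact_gt0 expf_neq0 // gt_eqF.
  apply: le_trans (lerD h1 h2) _.
  by rewrite le_eqVlt; apply/orP; left; apply/eqP; field.
rewrite (zmod_id _ (Tg pi) _ (Tg pistar)).
apply: le_trans (enormD _ _) _; apply: le_trans (lerD (enormD _ _) (lexx _)) _.
rewrite enormN.
have -> : 2 * (L / (p.+1)`!%:R) * eps ^+ p.+1 + (eps / mu) ^+ p =
   L / (p.+1)`!%:R * eps ^+ p.+1 + L / (p.+1)`!%:R * eps ^+ p.+1 + (eps / mu) ^+ p by ring.
apply: lerD => //; apply: lerD; exact: le_trans Rb.
Qed.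

End DB.
Unset Implicit Arguments.
Lemma enorm_n0 (R : realType) k (v : 'rV[R]_k) : k = 0%N -> enorm v = 0.
Proof. by case: k v => // v _; rewrite /enorm big_ord0 sqrtr0. Qed.

Lemma enorm_const_gt0 (R : realType) k : (0 < k)%N -> 0 < enorm (const_mx 1 : 'rV[R]_k).
Proof.
move=> k0; rewrite /enorm sqrtr_gt0.
under eq_bigr do rewrite mxE expr1n.
by rewrite sumr_const card_ord ltr0n.
Qed.

Theorem mainTheorem4 (R : realType) (n m : nat)
  (f : 'rV[R]_n -> 'rV[R]_m -> 'rV[R]_n)
  (pistar pi : 'rV[R]_n -> 'rV[R]_m)
  (X : set 'rV[R]_n) (eta : R) (gamma : R -> R) (p : nat)
  (xi : 'rV[R]_n) (L mu alpha : R) (T : nat) :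
  compact X ->
  0 < eta ->
  (exists beta, locally_dISS f pistar X eta beta gamma) ->
  (0 < p)%N ->
  (* gamma(x) <= O(x^{1/r}) as x -> 0+, with r = p *)
  (exists C delta, 0 < delta /\
     forall x, 0 < x < delta -> gamma x <= C * x `^ (p%:R)^-1) ->
  X xi ->
  Cp p pi -> Cp p pistar ->
  (forall pib, pib = pi \/ pib = pistar ->
   forall x x0 : 'rV[R]_n,
     enorm (pib x - \sum_(j < p.+1)
                (j`!%:R)^-1 *: iderive (nseq j (x - x0)) pib x0)
       <= L / (p.+1)`!%:R * enorm (x - x0) ^+ p.+1) ->
  0 < mu -> 0 < alpha -> alpha <= 2^-1 ->
  (forall x, 0 <= x <= alpha ->
     le_ginv gamma (2 * (L / (p.+1)`!%:R) * x ^+ p.+1 + (x / mu) ^+ p) x) ->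
  let d t j := dDelta_norm j pi pistar (traj f pistar (fun _ => 0) xi t) in
  (forall t j, (t < T)%N -> (j < p)%N ->
     mu * (4 / j`!%:R * d t j) `^ (p%:R)^-1 <= alpha) ->
  (forall t j, (t < T)%N -> (j < p)%N ->
     2 * L * mu ^+ p.+1 / (p.+1)`!%:R
         * (4 / j`!%:R * d t j) `^ (p.+1%:R / p%:R)
       + 4 / j`!%:R * d t j <= eta) ->
  (forall t, (t < T)%N -> d t p <= p`!%:R / (2 * mu ^+ p)) ->
  forall t, (1 <= t <= T)%N ->
    enorm (traj f pistar (fun _ => 0) xi t - traj f pi (fun _ => 0) xi t)
      <= \big[Num.max/0]_(k < t) \big[Num.max/0]_(j < p)
           (mu * (4 / j`!%:R) `^ (p%:R)^-1 * (d k j) `^ (p%:R)^-1).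
Proof.
move=> cX eta0 [beta [KL [Kg ISS]]] p0 _ Xxi Cpi Cps Tay mu0 al0 al2 ginv d H1 H2 H3 t0 /andP[_ t0T].
have [n0|npos] := posnP n.
  by rewrite enorm_n0 //; apply: bmax_ge0.
have L0 : 0 <= L.
  have := Tay pi (or_introl erefl) (const_mx 1) 0.
  move/(le_trans (enorm_ge0 _)).
  rewrite pmulr_lge0; last by apply: exprn_gt0; rewrite subr0 enorm_const_gt0.
  by rewrite pmulr_lge0 // invr_gt0 ltr0n fact_gt0.
pose xs k := traj f pistar (fun _ => 0) xi k.
pose xp k := traj f pi (fun _ => 0) xi k.
pose F (k j : nat) := mu * (4 / j`!%:R) `^ (p%:R)^-1 * (d k j) `^ (p%:R)^-1.
pose B t := \big[Num.max/0]_(k < t) \big[Num.max/0]_(j < p) F k j.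
pose Phi (x : R) := 2 * (L / (p.+1)`!%:R) * x ^+ p.+1 + (x / mu) ^+ p.
have dge : forall k j, (j <= p)%N -> 0 <= d k j.
  by move=> k j hj; exact: (opnorm_ge0 _ Cpi Cps hj).
have FE : forall k j, (j <= p)%N -> F k j = mu * (4 / j`!%:R * d k j) `^ (p%:R)^-1.
  move=> k j hj; rewrite /F -mulrA -powRM ?dge //.
suff main : forall t, (t <= T)%N -> enorm (xs t - xp t) <= B t by exact: (main t0 t0T).
elim/ltn_ind => t IH tT.
have [->|tpos] := posnP t.
  by rewrite /B big_ord0 /xs /xp /= subrr enorm0.
have eps0 : 0 <= B t by apply: bmax_ge0.
have Fle : forall k j, (k < t)%N -> (j < p)%N -> F k j <= B t.
  move=> k j hk hj; apply: le_trans (bmax_ub (fun j => F k j) hj) _.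
  exact: (bmax_ub (fun k => \big[Num.max/0]_(j < p) F k j) hk).
have epsal : B t <= alpha.
  apply: (@bmax_le R t (fun k => \big[Num.max/0]_(j < p) F k j) _ (ltW al0)) => k hk.
  apply: (@bmax_le R p (fun j => F k j) _ (ltW al0)) => j hj.
  rewrite FE; last exact: ltnW hj.
  apply: H1 => //; exact: leq_trans hk tT.
have eps2 : B t <= 2^-1 by apply: le_trans epsal al2.
have IHk : forall k, (k < t)%N -> enorm (xp k - xs k) <= B t.
  move=> k hk; rewrite enormB; apply: le_trans (IH k hk (ltnW (leq_trans hk tT))) _.
  apply: (@bmax_le R k (fun k => \big[Num.max/0]_(j < p) F k j) _ eps0) => i hi.
  exact: (bmax_ub (fun k => \big[Num.max/0]_(j < p) F k j) (leq_trans hi (ltnW hk))).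
have hD : forall k, (k < t)%N -> enorm (pi (xp k) - pistar (xp k)) <= Phi (B t).
  move=> k hk.
  apply: (delta_bound p0 Cpi Cps L0 mu0 eps0 eps2
     (Tay pi (or_introl erefl) _ _) (Tay pistar (or_intror erefl) _ _) (IHk k hk)).
    move=> j hj; have := Fle k j hk hj; rewrite FE //; exact: ltnW hj.
  exact: H3 (leq_trans hk tT).
have Phi_eta : Phi (B t) <= eta.
  have Phi0 : Phi 0 <= eta.
    by rewrite /Phi mul0r expr0n /= mulr0 add0r expr0n gtn_eqF // ltW.
  rewrite /B; have [->//|[k ->]] := bmax_cases (fun k : 'I_t => \big[Num.max/0]_(j < p) F k j).
  have [->//|[j ->]] := bmax_cases (fun j : 'I_p => F k j).
  rewrite FE; last exact: ltnW (ltn_ord j).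
  have hk : (k < T)%N by exact: leq_trans (ltn_ord k) tT.
  have c0 : 0 <= 4 / j`!%:R * d k j by rewrite mulr_ge0 ?(dge _ _ (ltnW (ltn_ord j))) // divr_ge0 // ler0n.
  apply: le_trans (H2 k j hk (ltn_ord j)); rewrite le_eqVlt; apply/orP; left; apply/eqP.
  rewrite /Phi exprMn powR_invS // [mu * _]mulrC mulfK ?gt_eqF // powR_invK //.
  by ring.
pose D s := if (s < t)%N then pi (xp s) - pistar (xp s) else 0.
have trajE : forall s, (s <= t)%N -> traj f pistar D xi s = xp s.
  elim=> [//|s IHs] hs /=.
  by rewrite IHs ?(ltnW hs) // /D hs addrC subrK /xp /= addr0.
have Dle : forall s, enorm (D s) <= eta.
  move=> s; rewrite /D; case: ifP => hs; first exact: le_trans (hD s hs) Phi_eta.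
  by rewrite enorm0 ltW.
have := ISS xi xi Xxi Xxi D Dle t.
rewrite trajE // subrr enorm0 (proj1 (proj1 KL t)) add0r => hiss.
rewrite enormB; apply: le_trans hiss _.
apply: (ginv_bound Kg (bmax_ge0 _ _ _) eps0 _ (ginv _ _)); last by rewrite eps0 epsal.
have Phi0 : 0 <= Phi (B t) by apply: le_trans (enorm_ge0 _) (hD 0%N tpos).
apply: (@bmax_le R t (fun k => enorm (D k)) _ Phi0) => k hk; rewrite /D hk; exact: hD.
Qed.
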